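(* Let $\mathbf{B}$ be the interaction matrix of an antiferromagnetic $q$-spin system, and let $\mathbf{z}_1,\mathbf{z}_2\in\mathbb{R}^q_{\geq0}$ with $\|\mathbf{z}_1\|_1=\|\mathbf{z}_2\|_1=1$. Then \[(\mathbf{z}_1^{\intercal}\mathbf{B}\mathbf{z}_1)(\mathbf{z}_2^{\intercal}\mathbf{B}\mathbf{z}_2)\leq(\mathbf{z}_1^{\intercal}\mathbf{B}\mathbf{z}_2)^2,\] with equality if and only if $\mathbf{z}_1=\mathbf{z}_2$.
   Context: $\mathbf{B}$ is a symmetric irreducible $q\times q$ matrix with nonnegative entries. It is antiferromagnetic if, apart from its Perron–Frobenius eigenvalue (which is positive and simple), all its eigenvalues are negative; in particular $\mathbf{B}$ is invertible. *)

(* Defs.v *)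
From HB Require Import structures.
From mathcomp Require Import all_boot all_order all_algebra.
From mathcomp Require Import reals.
Set Implicit Arguments. Unset Strict Implicit. Unset Printing Implicit Defensive.
Import Order.TTheory GRing.Theory Num.Theory.
Local Open Scope ring_scope.

Definition irreducible_mx (R : realType) (q : nat) (B : 'M[R]_q) : Prop :=
  forall i j : 'I_q, connect (fun a b => 0 < B a b) i j.

Definition antiferromagnetic (R : realType) (q : nat) (B : 'M[R]_q) : Prop :=
  [/\ B^T = B,
      (forall i j, 0 <= B i j),
      irreducible_mx B &
      exists2 lam : R, 0 < lam /\ eigenvalue B lam &
        mup lam (char_poly B) = 1%N /\
        (forall mu : R, eigenvalue B mu -> mu != lam -> mu < 0)].

Definition bform (R : realType) (q : nat) (B : 'M[R]_q) (z1 z2 : 'cV[R]_q) : R :=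
  (z1^T *m B *m z2) 0 0.

Definition prob_vec (R : realType) (q : nat) (z : 'cV[R]_q) : Prop :=
  (forall i, 0 <= z i 0) /\ \sum_i `|z i 0| = 1.

(* Main.v *)
Require Import Defs.
From HB Require Import structures.
From mathcomp Require Import all_boot all_order all_algebra.
From mathcomp Require Import reals.
From mathcomp Require Import complex ring lra.
Import Order.TTheory GRing.Theory Num.Theory.
Local Open Scope ring_scope.


Lemma char_poly_conj (F : fieldType) n (P A : 'M[F]_n) : P \in unitmx ->
  char_poly (invmx P *m A *m P) = char_poly A.
Proof.
move=> Pu; rewrite /char_poly.
set Pp := map_mx polyC P; set Pi := map_mx polyC (invmx P).
have PiPp : Pi *m Pp = 1%:M by rewrite -map_mxM mulVmx // map_mx1.
have -> : char_poly_mx (invmx P *m A *m P) = Pi *m char_poly_mx A *m Pp.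
  rewrite /char_poly_mx mulmxBr mulmxBl !map_mxM -/Pp -/Pi.
  by rewrite mul_mx_scalar -scalemxAl PiPp scalemx1.
rewrite !det_mulmx mulrC mulrA -det_mulmx.
have -> : Pp *m Pi = 1%:M by rewrite -map_mxM mulmxV // map_mx1.
by rewrite det1 mul1r.
Qed.

Section K.
Context {R : realType} {q : nat} {B : 'M[R]_q}.
Local Notation C := (R[i]).
Local Notation f := (real_complex R).
Let Bc : 'M[C]_q := map_mx f B.

Lemma Bc_herm : B^T = B -> Bc \is hermsymmx.
Proof.
move=> BT; apply: realsym_hermsym.
  apply/is_hermitianmxP; rewrite expr0 scale1r map_mx_id //.
  by rewrite /Bc map_trmx BT.
by apply/mxOverP => i j; rewrite mxE complex_real.
Qed.

Lemma negdef lam (u : 'rV[R]_q) : B^T = B -> u != 0 -> u *m B = lam *: u ->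
  mup lam (char_poly B) = 1%N ->
  (forall mu, eigenvalue B mu -> mu != lam -> mu < 0) ->
  forall x : 'cV_q, (u *m x) 0 0 = 0 -> x != 0 -> bform B x x < 0.
Proof.
move=> BT u0 uB mup1 neg x ux x0.
have H := Bc_herm BT.
pose P : 'M[C]_q := spectralmx Bc.
pose D : 'rV[C]_q := spectral_diag Bc.
have /orthomx_spectralP BcE0 := hermitian_normalmx H.
have BcE : Bc = invmx P *m diag_mx D *m P := BcE0.
have Pu : P \in unitmx := spectral_unit Bc.
have Dreal i : D 0 i = f (complex.Re (D 0 i)).
  have /mxOverP/(_ 0 i) := hermitian_spectral_diag_real H.
  by rewrite complexRe => /Creal_ReP.
have Deig i : eigenvalue B (complex.Re (D 0 i)).
  have e1 : row i P *m Bc = D 0 i *: row i P.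
    rewrite <- row_mul; rewrite BcE !mulmxA mulmxV // mul1mx mul_diag_mx.
    by apply/rowP => j; rewrite !mxE.
  have e2 : row i P != 0.
    apply/eqP => h; have : ~~ row_free P.
      by apply/row_freePn; exists i; rewrite h sub0mx.
    by rewrite row_free_unit Pu.
  suff : eigenvalue Bc (D 0 i) by rewrite {1}Dreal eigenvalue_map.
  by apply/eigenvalueP; exists (row i P).
have Dneg i : D 0 i != f lam -> D 0 i < 0.
  rewrite Dreal => ne; rewrite -(rmorph0 f) ltcR; apply: neg => //.
  by apply: contra ne => /eqP ->.
have cpE : map_poly f (char_poly B) = \prod_i ('X - (D 0 i)%:P).
  rewrite map_char_poly -/Bc BcE char_poly_conj // char_poly_trig ?diag_mx_is_trig //.
  by apply: eq_bigr => i _; rewrite mxE eqxx.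
have uniq i k : i != k -> D 0 i = f lam -> D 0 k = f lam -> False.
  move=> ik Di Dk.
  have : ('X - (f lam)%:P) ^+ 2 %| map_poly f (char_poly B).
    rewrite cpE (bigD1 i) // (bigD1 k) /=; last by rewrite eq_sym.
    rewrite Di Dk mulrA -expr2 dvdp_mulr //.
  rewrite -map_polyXsubC -rmorphXn dvdp_map -mup_geq ?mup1 //.
  by rewrite monic_neq0 // char_poly_monic.
pose uc : 'rV[C]_q := map_mx f u.
have hu : uc *m Bc = f lam *: uc by rewrite /uc /Bc -map_mxM uB map_mxZ.
pose s : 'rV[C]_q := uc *m invmx P.
have BcP : Bc *m invmx P = invmx P *m diag_mx D by rewrite BcE mulmxK.
have hs i : s 0 i * D 0 i = f lam * s 0 i.
  have : s *m diag_mx D = f lam *: s.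
    by rewrite /s -mulmxA -BcP mulmxA hu -scalemxAl.
  by rewrite mul_mx_diag => /rowP/(_ i); rewrite !mxE.
have suc : s *m P = uc by rewrite /s mulmxKV.
have s0 : s != 0.
  apply: contra u0 => /eqP s0; move: suc; rewrite s0 mul0mx => /esym/eqP.
  by rewrite map_mx_eq0.
have [k sk] : exists k, s 0 k != 0.
  case: (pickP (fun k => s 0 k != 0)) => [k sk|none]; first by exists k.
  case/eqP: s0; apply/rowP => j.
  by have := none j; rewrite /= => /negbFE/eqP ->; rewrite mxE.
have Dk : D 0 k = f lam by apply: (mulfI sk); rewrite hs mulrC.
have si i : i != k -> s 0 i = 0.
  move=> ik; apply/eqP; apply: contraT => sne.
  by case: (uniq i k) => //; apply: (mulfI sne); rewrite hs mulrC.
pose xc : 'cV[C]_q := map_mx f x.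
pose y : 'cV[C]_q := P *m xc.
have yk : y k 0 = 0.
  have : (s *m y) 0 0 = 0.
    by rewrite /y mulmxA suc /uc /xc -map_mxM mxE ux rmorph0.
  rewrite mxE (bigD1 k) //= big1 ?addr0; last by move=> j /si ->; rewrite mul0r.
  by move/eqP; rewrite mulf_eq0 (negPf sk) /= => /eqP.
have y0 : y != 0.
  apply: contra x0 => /eqP y0.
  have : invmx P *m y = xc by rewrite /y mulKmx.
  by rewrite y0 mulmx0 => /esym/eqP; rewrite map_mx_eq0.
have xcR : map_mx Num.conj xc = xc.
  by apply/matrixP => i j; rewrite !mxE conj_Creal // complex_real.
have iP : invmx P = map_mx Num.conj P^T.
  exact: (invmx_unitary (spectral_unitarymx Bc)).
have form : f (bform B x x) = \sum_j D 0 j * `|y j 0| ^+ 2.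
  rewrite /bform; have -> : f ((x^T *m B *m x) 0 0) = (map_mx f (x^T *m B *m x)) 0 0 by rewrite [RHS]mxE.
  rewrite !map_mxM -map_trmx -/Bc -/xc BcE iP.
  rewrite !mulmxA.
  have -> : xc^T *m map_mx Num.conj P^T = (map_mx Num.conj y)^T.
    rewrite /y map_mxM xcR trmx_mul; congr (_ *m _); apply/matrixP => i j; rewrite !mxE; reflexivity.
  rewrite -mulmxA -/y mul_mx_diag mxE; apply: eq_bigr => j _.
  rewrite [(\matrix_(i, j) _) 0 j]mxE [(_^T) 0 j]mxE [map_mx _ _ _ _]mxE normCKC mulrAC mulrC. reflexivity.
have [j yj] : exists j, y j 0 != 0.
  case: (pickP (fun j => y j 0 != 0)) => [j yj|none]; first by exists j.
  case/eqP: y0; apply/matrixP => j l; rewrite ord1.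
  by have := none j; rewrite /= => /negbFE/eqP ->; rewrite mxE.
have jk : j != k by apply: contra yj => /eqP ->; rewrite yk.
have Dlt i : i != k -> D 0 i < 0.
  by move=> ik; apply: Dneg; apply/eqP => Di; apply: (uniq i k ik Di Dk).
have : \sum_j D 0 j * `|y j 0| ^+ 2 < 0.
  rewrite (bigD1 j) //=.
  have t1 : D 0 j * `|y j 0| ^+ 2 < 0.
    by rewrite nmulr_rlt0 ?Dlt // exprn_gt0 // normr_gt0.
  have t2 : \sum_(i | i != j) D 0 i * `|y i 0| ^+ 2 <= 0.
    apply: sumr_le0 => i _; have [->|ik] := eqVneq i k.
      by rewrite yk normr0 expr0n mulr0.
    by rewrite nmulr_rle0 ?Dlt // exprn_ge0.
  by have := ltr_leD t1 t2; rewrite addr0.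
by rewrite -form -(rmorph0 f) ltcR.
Qed.
End K.


Section L.
Context {R : realType} {q : nat} {B : 'M[R]_q}.

Lemma bform_sym (x y : 'cV[R]_q) : B^T = B -> bform B x y = bform B y x.
Proof.
move=> BT; rewrite /bform -[in LHS](trmxK (x^T *m B *m y)) mxE.
by rewrite !trmx_mul trmxK BT mulmxA.
Qed.

Lemma entD (M N : 'M[R]_1) : (M + N) 0 0 = M 0 0 + N 0 0.
Proof. by rewrite mxE. Qed.
Lemma entZ a (M : 'M[R]_1) : (a *: M) 0 0 = a * M 0 0.
Proof. by rewrite mxE. Qed.

Lemma bform_linl (x y z : 'cV[R]_q) a b :
  bform B (a *: x + b *: y) z = a * bform B x z + b * bform B y z.
Proof.
by rewrite /bform raddfD /= !linearZ /= mulmxDl mulmxDl -!scalemxAl entD !entZ.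
Qed.

Lemma bform_linr (x y z : 'cV[R]_q) a b :
  bform B z (a *: x + b *: y) = a * bform B z x + b * bform B z y.
Proof. by rewrite /bform mulmxDr -!scalemxAr entD !entZ. Qed.

Lemma bform_comb (x y : 'cV[R]_q) a b : B^T = B ->
  bform B (a *: x + b *: y) (a *: x + b *: y) =
  a^+2 * bform B x x + 2 * (a * b) * bform B x y + b^+2 * bform B y y.
Proof.
move=> BT; rewrite bform_linl !bform_linr (bform_sym y x BT); ring.
Qed.

Lemma bform_ge0 {z : 'cV[R]_q} : (forall i j, 0 <= B i j) -> (forall i, 0 <= z i 0) -> 0 <= bform B z z.
Proof.
move=> hB hz; rewrite /bform mxE; apply: sumr_ge0 => j _; rewrite mxE.
apply: mulr_ge0 => //; apply: sumr_ge0 => i _; rewrite !mxE; exact: mulr_ge0.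
Qed.

Definition sig (x : 'cV[R]_q) := \sum_i x i 0.

Lemma sig_comb (x y : 'cV[R]_q) a b : sig (a *: x + b *: y) = a * sig x + b * sig y.
Proof. by rewrite /sig !mulr_sumr -big_split; apply: eq_bigr => i _; rewrite !mxE. Qed.

Lemma sig_prob {z : 'cV[R]_q} : prob_vec z -> sig z = 1.
Proof. by case=> hz <-; apply: eq_bigr => i _; rewrite ger0_norm. Qed.

Lemma sig_neq0 {x : 'cV[R]_q} : sig x = 1 -> x != 0.
Proof.
move=> h; apply/eqP => x0; move: h; rewrite x0 /sig big1; last by move=> i _; rewrite mxE.
by move/eqP; rewrite eq_sym oner_eq0.
Qed.

Lemma ell_comb (u : 'rV[R]_q) (x y : 'cV[R]_q) a b :
  (u *m (a *: x + b *: y)) 0 0 = a * (u *m x) 0 0 + b * (u *m y) 0 0.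
Proof. by rewrite mulmxDr -!scalemxAr !mxE. Qed.
End L.

Lemma alg1 (R : realType) (a1 a2 p r s : R) : 0 < a1 * a2 -> 0 <= p -> 0 <= r ->
  a2^+2 * p - 2 * (a1 * a2) * s + a1^+2 * r <= 0 -> p * r <= s ^+ 2.
Proof.
move=> h hp hr hF.
have X0 : 0 <= a2^+2 * p by rewrite mulr_ge0 // sqr_ge0.
have Y0 : 0 <= a1^+2 * r by rewrite mulr_ge0 // sqr_ge0.
have hZ : a2^+2 * p + a1^+2 * r <= 2 * (a1 * a2) * s by lra.
have h2 : (a2^+2 * p + a1^+2 * r)^+2 <= (2 * (a1 * a2) * s)^+2.
  by rewrite ler_sqr ?nnegrE //; lra.
have h3 : 4 * (a2^+2 * p) * (a1^+2 * r) <= (a2^+2 * p + a1^+2 * r)^+2.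
  rewrite -subr_ge0.
  have -> : (a2^+2 * p + a1^+2 * r)^+2 - 4 * (a2^+2 * p) * (a1^+2 * r) = (a2^+2 * p - a1^+2 * r)^+2 by ring.
  exact: sqr_ge0.
have E1 : 4 * (a2^+2 * p) * (a1^+2 * r) = 4 * ((a1*a2)^+2 * (p*r)) by ring.
have E2 : (2 * (a1 * a2) * s)^+2 = 4 * ((a1*a2)^+2 * s^+2) by ring.
have h4 : (a1*a2)^+2 * (p * r) <= (a1*a2)^+2 * s^+2.
  rewrite E1 E2 in h2 h3.
  by rewrite -(ler_pM2l (_ : 0 < 4 :> R)) //; apply: le_trans h3 h2.
by rewrite -(ler_pM2l (exprn_gt0 2 h)).
Qed.
Lemma alg2 (R : realType) (a1 a2 p r s : R) : 0 < a1 * a2 -> 0 <= p -> 0 <= r ->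
  a2^+2 * p - 2 * (a1 * a2) * s + a1^+2 * r <= 0 -> p * r = s ^+ 2 ->
  a2^+2 * p - 2 * (a1 * a2) * s + a1^+2 * r = 0.
Proof.
move=> h hp hr hF e.
have X0 : 0 <= a2^+2 * p by rewrite mulr_ge0 // sqr_ge0.
have Y0 : 0 <= a1^+2 * r by rewrite mulr_ge0 // sqr_ge0.
have hZ : a2^+2 * p + a1^+2 * r <= 2 * (a1 * a2) * s by lra.
have e2 : (2 * (a1 * a2) * s)^+2 = 4 * (a2^+2 * p) * (a1^+2 * r).
  have -> : (2 * (a1 * a2) * s)^+2 = 4 * ((a1*a2)^+2 * s^+2) by ring.
  have -> : 4 * (a2^+2 * p) * (a1^+2 * r) = 4 * ((a1*a2)^+2 * (p*r)) by ring.
  by rewrite e.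
have h3 : (a2^+2 * p + a1^+2 * r)^+2 - (2 * (a1 * a2) * s)^+2 = (a2^+2 * p - a1^+2 * r)^+2.
  by rewrite e2; ring.
have h4 : (a2^+2 * p + a1^+2 * r)^+2 >= (2 * (a1 * a2) * s)^+2.
  by rewrite -subr_ge0 h3 sqr_ge0.
have h5 : a2^+2 * p + a1^+2 * r >= 2 * (a1 * a2) * s.
  by rewrite -ler_sqr ?nnegrE //; lra.
lra.
Qed.

Lemma div_ge0' (R : realType) (x y : R) : 0 <= x * y -> 0 <= x / y.
Proof.
move=> h; have [->|y0] := eqVneq y 0; first by rewrite invr0 mulr0.
have -> : x / y = (x * y) / (y ^+ 2) by rewrite expr2 invfM mulrA mulfK.
by rewrite divr_ge0 // sqr_ge0.
Qed.

Theorem lemma17 (R : realType) (q : nat) (B : 'M[R]_q) (z1 z2 : 'cV[R]_q) :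
  antiferromagnetic B -> prob_vec z1 -> prob_vec z2 ->
  bform B z1 z1 * bform B z2 z2 <= bform B z1 z2 ^+ 2 /\
  (bform B z1 z1 * bform B z2 z2 = bform B z1 z2 ^+ 2 <-> z1 = z2).
Proof.
move=> [BT Bnn _ [lam [lam0 eig] [mup1 neg]]] pz1 pz2.
have [u uB u0] := eigenvalueP eig.
have ND := @negdef _ _ _ lam u BT u0 uB mup1 neg.
set a1 : R := (u *m z1) 0 0; set a2 : R := (u *m z2) 0 0.
have p0 := bform_ge0 Bnn pz1.1; have r0 := bform_ge0 Bnn pz2.1.
have s1 := sig_prob pz1; have s2 := sig_prob pz2.
have a1n : a1 != 0.
  by apply/eqP => h; have := ND z1 h (sig_neq0 s1); rewrite ltNge p0.
have a2n : a2 != 0.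
  by apply/eqP => h; have := ND z2 h (sig_neq0 s2); rewrite ltNge r0.
have a12 : 0 < a1 * a2.
  rewrite ltNge; apply/negP => hle.
  have hlt : a1 * a2 < 0 by rewrite lt_neqAle hle mulf_neq0.
  have d0 : a2 - a1 != 0.
    apply/eqP => h; have e : a2 = a1 by apply/eqP; rewrite -subr_eq0 h.
    by move: hlt; rewrite e -expr2 ltNge sqr_ge0.
  pose t := a2 / (a2 - a1).
  have t0 : 0 <= t by apply: div_ge0'; rewrite mulrBr; have := sqr_ge0 a2; rewrite expr2; lra.
  have t1 : 0 <= 1 - t.
    have -> : 1 - t = (- a1) / (a2 - a1) by rewrite /t; field.
    by apply: div_ge0'; rewrite mulrBr; have := sqr_ge0 a1; rewrite expr2; lra.
  pose w := t *: z1 + (1 - t) *: z2.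
  have hw : (u *m w) 0 0 = 0 by rewrite ell_comb -/a1 -/a2 /t; field.
  have sw : sig w = 1 by rewrite sig_comb s1 s2; ring.
  have := ND w hw (sig_neq0 sw); rewrite ltNge bform_ge0 //.
  move=> i; rewrite !mxE; apply: addr_ge0; apply: mulr_ge0 => //.
    exact: pz1.1.
  exact: pz2.1.
pose w := a2 *: z1 + (- a1) *: z2.
have hw : (u *m w) 0 0 = 0 by rewrite ell_comb -/a1 -/a2; ring.
have F : bform B w w = a2^+2 * bform B z1 z1 - 2 * (a1 * a2) * bform B z1 z2
    + a1^+2 * bform B z2 z2 by rewrite bform_comb //; ring.
have Fle : bform B w w <= 0.
  have [->|wn] := eqVneq w 0; last exact: ltW (ND w hw wn).
  by rewrite /bform trmx0 !mul0mx mxE.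
have Feq : bform B w w = 0 -> z1 = z2.
  move=> h; have [w0|wn] := eqVneq w 0; last by move: (ND w hw wn); rewrite h ltxx.
  have : sig w = 0 by rewrite w0 /sig big1 // => i _; rewrite mxE.
  rewrite sig_comb s1 s2 !mulr1 => /eqP; rewrite subr_eq0 => /eqP e.
  move: w0; rewrite /w e scaleNr -scalerBr => /eqP; rewrite scaler_eq0 (negPf a1n) /=.
  by rewrite subr_eq0 => /eqP.
split; first by apply: (alg1 _ _ _ _ _ _ a12 p0 r0); rewrite -F.
split; last by move=> <-; rewrite expr2.
by move=> e; apply: Feq; rewrite F; apply: (alg2 _ _ _ _ _ _ a12 p0 r0) => //; rewrite -F.
Qed.
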